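(* Suppose block indices are drawn independently and uniformly at random from $[n]$ (one draw per subroutine call by a worker), and an iteration is completed once updates for $\tau$ distinct blocks have been collected (updates for an already-collected block being overwritten/redundant). Then: (i) the expected number of subroutine calls (draws) needed to complete an iteration is $\tau+\sum_{i=1}^{\tau-1}\frac{i}{n-i}$; (ii) if $0.02n<\tau<0.6n$, then with probability at least $1-\exp(-n/60)$, no more than $2\tau$ draws suffice to complete an iteration. *)

(* Defs.v *)
From mathcomp Require Import all_boot all_order all_algebra.
From mathcomp Require Import all_classical all_reals all_analysis.
Set Implicit Arguments. Unset Strict Implicit. Unset Printing Implicit Defensive.
Import Order.TTheory GRing.Theory Num.Theory.
Local Open Scope ring_scope.

(* Draws are i.i.d. uniform on [n] = 'I_n.  T = number of draws (subroutine
   calls) until tau distinct blocks have been collected.  The event {T = k}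
   depends only on the first k draws: it holds iff the first k-1 draws contain
   fewer than tau distinct blocks and the first k draws contain at least tau
   distinct blocks. *)
Definition completes_at (n tau k : nat) (s : k.-tuple 'I_n) : bool :=
  (size (undup (take k.-1 s)) < tau)%N && (tau <= size (undup s))%N.

Definition prob_T_eq (R : realType) (n tau k : nat) : R :=
  #|[set s : k.-tuple 'I_n | completes_at tau s]|%:R / (n ^ k)%:R.

Definition prob_T_le (R : realType) (n tau m : nat) : R :=
  \sum_(k < m.+1) prob_T_eq R n tau k.

Definition expect_T (R : realType) (n tau : nat) : \bar R :=
  (\sum_(0 <= k <oo) ((k%:R * prob_T_eq R n tau k)%:E))%E.

(* Main.v *)
Require Import Defs.
From mathcomp Require Import all_boot all_order all_algebra.
From mathcomp Require Import all_classical all_reals all_analysis.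
From mathcomp Require Import zify ring lra.
Import Order.TTheory GRing.Theory Num.Theory.
Import numFieldNormedType.Exports.
Set Implicit Arguments. Unset Strict Implicit. Unset Printing Implicit Defensive.

Section Comb.
Variable T : finType.

Lemma card_rcons k (P : pred (k.+1.-tuple T)) :
  #|[set s | P s]| = \sum_(t : k.-tuple T) #|[set x | P [tuple of rcons t x]]|.
Proof.
pose f (p : k.-tuple T * T) : k.+1.-tuple T := [tuple of rcons p.1 p.2].
have finj : injective f.
  move=> [a x] [b y] /(congr1 val) /= /rcons_inj [] /val_inj -> -> //.
have fb : bijective f.
  apply: inj_card_bij finj _.
  by rewrite card_prod !card_tuple expnSr.
rewrite -sum1_card (reindex f); last by apply: onW_bij.
transitivity (\sum_(t : k.-tuple T) \sum_(x : T) if P (f (t, x)) then 1 else 0)%N.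
  rewrite big_mkcond /= pair_big /=.
  by apply: eq_bigr => -[t x] _ /=; rewrite inE.
apply: eq_bigr => t _; rewrite -big_mkcond /= -sum1_card.
by apply: eq_bigl => x; rewrite inE.
Qed.

Lemma card_rcons_mem (s : seq T) x : #|rcons s x| = (x \notin s) + #|s|.
Proof.
rewrite -cardU1; apply: eq_card => y; by rewrite !inE mem_rcons in_cons.
Qed.

Lemma size_undup_card (s : seq T) : size (undup s) = #|s|.
Proof.
rewrite -(card_uniqP (undup_uniq s)); apply: eq_card => y; by rewrite mem_undup.
Qed.

End Comb.

Ltac bl := first [apply/eqP; lia | apply/negbTE/eqP; lia].

Section Cnt.
Variable n : nat.

Definition Nc k d := #|[set s : k.-tuple 'I_n | #|s| == d]|.

Lemma card_in_t (t : seq 'I_n) : #|[set x | x \in t]| = #|t|.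
Proof. by apply: eq_card => x; rewrite inE. Qed.

Lemma card_notin_t (t : seq 'I_n) : #|[set x | x \notin t]| = n - #|t|.
Proof.
have H : (#|t| + #|[set x | x \notin t]| = n)%N.
  rewrite -[RHS](card_ord n) -(cardC (mem t)); congr (_ + _)%N.
  by apply: eq_card => x; rewrite !inE.
lia.
Qed.

Lemma card_rcons_t k (t : k.-tuple 'I_n) x :
  #|[tuple of rcons t x]| = ((x \notin t) + #|t|)%N.
Proof. exact: card_rcons_mem. Qed.

Lemma sum_indic (I : finType) (b : pred I) c :
  (\sum_(i : I) (b i) * c = #|[set i | b i]| * c)%N.
Proof.
rewrite -sum1_card big_distrl /= [RHS]big_mkcond /=; apply: eq_bigr => i _.
by rewrite inE; case: (b i); rewrite ?mul1n ?mul0n.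
Qed.

Lemma Nc0 d : Nc 0 d = (d == 0%N).
Proof.
rewrite /Nc.
have c0 : #|([::] : seq 'I_n)| = 0%N by apply: eq_card0.
case: d => [|d].
  transitivity #|{: 0.-tuple 'I_n}|; last by rewrite card_tuple.
  by apply: eq_card => s; rewrite !inE tuple0 /= c0.
by apply: eq_card0 => s; rewrite !inE tuple0 /= c0.
Qed.

Lemma NcS k d : Nc k.+1 d =
   (d * Nc k d + (if d is d'.+1 then (n - d') * Nc k d' else 0))%N.
Proof.
rewrite /Nc card_rcons.
transitivity (\sum_(t : k.-tuple 'I_n)
   ((#|t| == d) * d + (#|t|.+1 == d) * (n - #|t|)))%N.
  apply: eq_bigr => t _.
  case: (boolP (#|t| == d)) => [/eqP Htd|Htd].
    have -> : (#|t|.+1 == d) = false by rewrite -Htd; elim: #|t|.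
    rewrite mul1n mul0n addn0; transitivity #|[set x | x \in t]|;
      last by rewrite card_in_t.
    apply: eq_card => x; rewrite !inE /= card_rcons_t -Htd.
    case: (x \in t) => /=; first by rewrite add0n eqxx.
    by rewrite add1n (gtn_eqF (ltnSn _)).
  case: (boolP (#|t|.+1 == d)) => [/eqP Htd'|Htd'].
    rewrite mul0n add0n mul1n; transitivity #|[set x | x \notin t]|;
      last by rewrite card_notin_t.
    apply: eq_card => x; rewrite !inE /= card_rcons_t -Htd'.
    case: (x \in t) => /=; first by rewrite add0n ltn_eqF // ltnSn.
    by rewrite add1n eqxx.
  rewrite !mul0n add0n; apply: eq_card0 => x; rewrite !inE /= card_rcons_t.
  case: (x \in t) => /=; first by rewrite add0n (negbTE Htd).
  by rewrite add1n (negbTE Htd').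
rewrite big_split /=; congr (_ + _)%N.
  rewrite (eq_bigr (fun t : k.-tuple 'I_n => (#|t| == d) * d)%N) //.
  by rewrite sum_indic mulnC.
case: d => [|d'].
  by apply: big1 => t _.
rewrite (eq_bigr (fun t : k.-tuple 'I_n => (#|t| == d') * (n - d'))%N).
  by rewrite sum_indic mulnC.
move=> t _; rewrite eqSS; case: (boolP (#|t| == d')) => [/eqP ->|] //.
Qed.

Lemma aux_cmp m tau (b : bool) : (0 < tau)%N ->
  ((m < tau) && (tau <= b + m))%N = (m == tau.-1) && b.
Proof.
move=> h; case: b => /=; rewrite ?andbT ?andbF.
  apply/idP/idP => [/andP [h1 h2]|/eqP h1]; first by apply/eqP; lia.
  by apply/andP; split; lia.
by apply/negbTE/andP => -[h1 h2]; lia.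
Qed.

Lemma Ncompl k tau : (0 < tau)%N ->
  #|[set s : k.+1.-tuple 'I_n | completes_at tau s]| =
  (Nc k tau.-1 * (n - tau.-1))%N.
Proof.
move=> tau0; rewrite card_rcons.
rewrite (eq_bigr (fun t : k.-tuple 'I_n => (#|t| == tau.-1) * (n - tau.-1))%N).
  by rewrite sum_indic.
move=> t _.
have Htk x : take k (rcons t x) = t by rewrite -cats1 take_size_cat // size_tuple.
transitivity #|[set x | (#|t| == tau.-1) && (x \notin t)]|.
  apply: eq_card => x; rewrite !inE /completes_at /= Htk !size_undup_card.
  by rewrite card_rcons_mem aux_cmp.
case: eqP => [Ht|_] /=; last by rewrite mul0n; apply: eq_card0 => x; rewrite inE.
by rewrite mul1n card_notin_t Ht.
Qed.
End Cnt.

Local Open Scope ring_scope.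

Section Chain.
Variables (R : realType) (n tau : nat).
Hypotheses (tau0 : (0 < tau)%N) (taun : (tau <= n)%N).

Lemma n_gt0 : (0 < n)%N. Proof. exact: leq_trans taun. Qed.
Lemma nR0 : (n%:R : R) != 0. Proof. by rewrite pnatr_eq0 -lt0n n_gt0. Qed.

Definition p k d : R := (Nc n k d)%:R / (n ^ k)%:R.

Lemma p0 d : p 0 d = (d == 0%N)%:R.
Proof. by rewrite /p Nc0 expn0 divr1. Qed.

Lemma pS k d : p k.+1 d = d%:R / n%:R * p k d +
  (if d is d'.+1 then (n - d')%:R / n%:R * p k d' else 0).
Proof.
have nk : ((n ^ k)%:R : R) != 0 by rewrite pnatr_eq0 -lt0n expn_gt0 n_gt0.
have := nR0 => nz.
rewrite /p NcS natrD natrM expnS natrM.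
case: d => [|d]; rewrite ?mul0r ?add0r ?addr0 ?natrM; field; by rewrite nz nk.
Qed.

Lemma p_ge0 k d : 0 <= p k d.
Proof. by rewrite /p divr_ge0. Qed.

Lemma PT0 : prob_T_eq R n tau 0 = 0.
Proof.
rewrite /prob_T_eq; have -> : #|[set s : 0.-tuple 'I_n | completes_at tau s]| = 0%N.
  apply: eq_card0 => s; rewrite !inE /completes_at tuple0 /=.
  by rewrite andbC leqNgt tau0.
by rewrite mul0r.
Qed.

Lemma PTS k : prob_T_eq R n tau k.+1 = p k tau.-1 * ((n - tau.-1)%:R / n%:R).
Proof.
have nk : ((n ^ k)%:R : R) != 0 by rewrite pnatr_eq0 -lt0n expn_gt0 n_gt0.
have := nR0 => nz.
rewrite /prob_T_eq /p Ncompl // natrM expnS natrM; field; by rewrite nz nk.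
Qed.

Lemma stepA (w : nat -> R) k :
  \sum_(d < tau) p k.+1 d * w d =
  \sum_(d < tau) p k d * (d%:R / n%:R * w d + (n - d)%:R / n%:R * w d.+1)
  - p k tau.-1 * ((n - tau.-1)%:R / n%:R) * w tau.
Proof.
case: tau tau0 taun => // t _ _ /=.
rewrite (eq_bigr (fun d : 'I_t.+1 => d%:R / n%:R * p k d * w d +
   (if (d : nat) is d'.+1 then (n - d')%:R / n%:R * p k d' * w d else 0))); last first.
  by move=> d _; rewrite pS; case: (nat_of_ord d) => [|d']; ring.
rewrite big_split /= [X in _ + X = _]big_ord_recl /= add0r.
under [X in _ = X - _]eq_bigr => d _ do rewrite mulrDr.
rewrite big_split /= [X in _ = _ + X - _]big_ord_recr /=.
set A := \sum_(i < t.+1) _; set B := \sum_(i < t.+1) _.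
have -> : A = B by apply: eq_bigr => d _; rewrite /A /B; ring.
set C := \sum_(i < t) _; set D := \sum_(i < t) _.
have -> : C = D by apply: eq_bigr => d _; rewrite /bump /= add0n add1n; ring.
ring.
Qed.


Lemma sum_p0 (w : nat -> R) : \sum_(d < tau) p 0 d * w d = w 0%N.
Proof.
case: tau tau0 => // t _; rewrite big_ord_recl /= p0 eqxx mul1r.
by rewrite big1 ?addr0 // => i _; rewrite p0 /= mul0r.
Qed.

Lemma ab1 (d : nat) : (d <= n)%N -> d%:R / n%:R + (n - d)%:R / n%:R = 1 :> R.
Proof.
move=> dn; rewrite -mulrDl natrB // addrC subrK divff //; exact: nR0.
Qed.

Lemma total_prob k : \sum_(j < k.+1) prob_T_eq R n tau j + \sum_(d < tau) p k d = 1.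
Proof.
elim: k => [|k IH].
  rewrite big_ord1 PT0 add0r.
  rewrite -[RHS](sum_p0 (fun _ => 1)); apply: eq_bigr => d _; by rewrite mulr1.
rewrite big_ord_recr /= PTS.
rewrite (eq_bigr (fun d : 'I_tau => p k.+1 d * 1)); last by move=> d _; rewrite mulr1.
rewrite (stepA (fun _ => 1)).
rewrite (eq_bigr (fun d : 'I_tau => p k d)); last first.
  move=> d _; rewrite !mulr1 ab1 ?mulr1 //.
  by apply: leq_trans taun; apply: ltnW.
by rewrite mulr1 -[RHS]IH; ring.
Qed.

Section Tail.
Variables (z : R) (h : nat -> R).
Hypotheses (z0 : 0 < z) (htau : 0 <= h tau)
  (hrec : forall d, (d < tau)%N -> h d = z * (d%:R / n%:R * h d + (n - d)%:R / n%:R * h d.+1)).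

Lemma tail k : z ^+ k * \sum_(d < tau) p k d * h d <= h 0%N.
Proof.
elim: k => [|k IH]; first by rewrite expr0 mul1r sum_p0.
apply: le_trans IH; rewrite exprSr -mulrA; apply: ler_wpM2l.
  by apply: exprn_ge0; apply: ltW.
rewrite stepA mulrBr mulr_sumr.
rewrite (eq_bigr (fun d : 'I_tau => p k d * h d)); last first.
  by move=> d _; rewrite [X in _ = _ * X]hrec //; ring.
have hx : 0 <= z * (p k tau.-1 * ((n - tau.-1)%:R / n%:R) * h tau).
  apply: mulr_ge0; first exact: ltW.
  apply: mulr_ge0 => //; apply: mulr_ge0; first exact: p_ge0.
  by apply: divr_ge0; apply: ler0n.
lra.
Qed.
End Tail.

Definition e d : R := \sum_(d <= i < tau) n%:R / (n - i)%:R.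

Lemma eS d : (d < tau)%N -> e d = n%:R / (n - d)%:R + e d.+1.
Proof. by move=> h; rewrite /e big_ltn. Qed.

Lemma etau : e tau = 0.
Proof. by rewrite /e big_geq. Qed.

Lemma expect_id k : \sum_(j < k.+1) j%:R * prob_T_eq R n tau j +
   \sum_(d < tau) p k d * (k%:R + e d) = e 0%N.
Proof.
elim: k => [|k IH].
  by rewrite big_ord1 PT0 mulr0 add0r (sum_p0 (fun d => 0%:R + e d)) add0r.
rewrite big_ord_recr /= PTS.
rewrite (stepA (fun d => k.+1%:R + e d)).
rewrite (eq_bigr (fun d : 'I_tau => p k d * (k%:R + e d))); last first.
  move=> d _; congr (_ * _).
  have dt : (d < tau)%N := ltn_ord d.
  have dn : (d < n)%N := leq_trans dt taun.
  rewrite (eS dt) (natrB _ (ltnW dn)).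
  have ndz : (n%:R - d%:R : R) != 0 by rewrite subr_eq0 eqr_nat gtn_eqF.
  have := nR0 => nz.
  rewrite -natr1; field; by rewrite nz ndz.
by rewrite -IH etau addr0; ring.
Qed.
End Chain.

Definition Fx (R : realType) (x w v : R) : R :=
  (w^+2 - 1) * (x^+2 / 2 + w^+2 * x^+3 / 3 + w^+4 * x^+4 / (4 * (1 - x * w^+2)))
  + 2 * x * (v - 1) + 1/60.

Lemma core (R : realType) (x w v a b : R) : 0 <= a -> a <= x -> x <= b -> 1 <= w -> w * v = 1 ->
  0 < 1 - b * w^+2 ->
  (w^+2 - 1) * (b^+2 / 2 + w^+2 * b^+3 / 3) * (1 - b * w^+2) + (w^+2 - 1) * w^+4 * b^+4 / 4
   + (2 * a * (v - 1) + 1/60) * (1 - b * w^+2) <= 0 ->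
  Fx x w v <= 0.
Proof.
move=> a0 ax xb w1 wv D0 chk.
rewrite /Fx.
set z := w^+2 in D0 chk *.
have x0 : 0 <= x by lra.
have z1 : 1 <= z by rewrite /z expr2; nra.
have v1 : v <= 1 by nra.
set D := 1 - b * z in D0 chk *.
have Dx : D <= 1 - x * z by rewrite /D; nra.
have x2 : x^+2 <= b^+2 by apply: lerXn2r; rewrite ?nnegrE //; lra.
have x3 : x^+3 <= b^+3 by apply: lerXn2r; rewrite ?nnegrE //; lra.
have x4 : x^+4 <= b^+4 by apply: lerXn2r; rewrite ?nnegrE //; lra.
have x4D : x^+4 / (4 * (1 - x * z)) <= b^+4 / (4 * D).
  apply: (@le_trans _ _ (x^+4 / (4 * D))).
    apply: ler_wpM2l; first exact: exprn_ge0.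
    rewrite lef_pV2 ?posrE; try lra.
  by apply: ler_wpM2r => //; rewrite invr_ge0; lra.
have zz : 0 <= z^+2 by apply: exprn_ge0; lra.
have t1 : z^+2 * (x^+4 / (4 * (1 - x * z))) <= z^+2 * (b^+4 / (4 * D)) by apply: ler_wpM2l.
have zx3 : z * x^+3 <= z * b^+3 by apply: ler_wpM2l => //; lra.
have inner : x^+2 / 2 + z * x^+3 / 3 + z^+2 * x^+4 / (4 * (1 - x * z)) <=
             b^+2 / 2 + z * b^+3 / 3 + z^+2 * b^+4 / (4 * D).
  lra.
have t2 : (z - 1) * (x^+2 / 2 + z * x^+3 / 3 + z^+2 * x^+4 / (4 * (1 - x * z))) <=
          (z - 1) * (b^+2 / 2 + z * b^+3 / 3 + z^+2 * b^+4 / (4 * D)).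
  by apply: ler_wpM2l => //; lra.
have t3 : 2 * x * (v - 1) <= 2 * a * (v - 1) by nra.
have w4 : w^+4 = z^+2 by rewrite /z -exprM.
rewrite w4.
have G : (z - 1) * (b^+2 / 2 + z * b^+3 / 3 + z^+2 * b^+4 / (4 * D)) + 2 * a * (v - 1) + 1/60 <= 0.
  have e : ((z - 1) * (b^+2 / 2 + z * b^+3 / 3 + z^+2 * b^+4 / (4 * D)) + 2 * a * (v - 1) + 1/60) * D =
     (z - 1) * (b^+2 / 2 + z * b^+3 / 3) * D + (z - 1) * z^+2 * b^+4 / 4 + (2 * a * (v - 1) + 1/60) * D.
    by field; rewrite gt_eqF.
  rewrite w4 in chk.
  move: e; set Gv := (_ + _ + 1/60) => e.
  have GD : Gv * D <= 0 by rewrite e.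
  nra.
lra.
Qed.

Lemma cases (R : realType) (x : R) : 1/50 < x -> x < 3/5 ->
  exists w v : R, [/\ 1 <= w, w * v = 1, x * w^+2 < 1 & Fx x w v <= 0].
Proof.
move=> h1 h2.
have x0 : 0 <= x by lra.
have [hb0|ha0] := lerP x (1/25).
  exists (191/100), (100/191); split; [lra | lra | | ].
    have : x * (191/100)^+2 <= (1/25) * (191/100)^+2 by apply: ler_wpM2r => //; lra.
    lra.
    apply: (@core R x (191/100) (100/191) (1/50) (1/25)); try lra.
have [hb1|ha1] := lerP x (11/100).
  exists (36/25), (25/36); split; [lra | lra | | ].
    have : x * (36/25)^+2 <= (11/100) * (36/25)^+2 by apply: ler_wpM2r => //; lra.
    lra.
    apply: (@core R x (36/25) (25/36) (1/25) (11/100)); try lra.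
have [hb2|ha2] := lerP x (13/50).
  exists (121/100), (100/121); split; [lra | lra | | ].
    have : x * (121/100)^+2 <= (13/50) * (121/100)^+2 by apply: ler_wpM2r => //; lra.
    lra.
    apply: (@core R x (121/100) (100/121) (11/100) (13/50)); try lra.
have [hb3|ha3] := lerP x (21/50).
  exists (109/100), (100/109); split; [lra | lra | | ].
    have : x * (109/100)^+2 <= (21/50) * (109/100)^+2 by apply: ler_wpM2r => //; lra.
    lra.
    apply: (@core R x (109/100) (100/109) (13/50) (21/50)); try lra.
have [hb4|ha4] := lerP x (53/100).
  exists (107/100), (100/107); split; [lra | lra | | ].
    have : x * (107/100)^+2 <= (53/100) * (107/100)^+2 by apply: ler_wpM2r => //; lra.
    lra.
    apply: (@core R x (107/100) (100/107) (21/50) (53/100)); try lra.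
have [hb5|ha5] := lerP x (29/50).
  exists (53/50), (50/53); split; [lra | lra | | ].
    have : x * (53/50)^+2 <= (29/50) * (53/50)^+2 by apply: ler_wpM2r => //; lra.
    lra.
    apply: (@core R x (53/50) (50/53) (53/100) (29/50)); try lra.
have hb6 : x <= (3/5) by lra.
exists (21/20), (20/21); split; [lra | lra | | ].
  have : x * (21/20)^+2 <= (3/5) * (21/20)^+2 by apply: ler_wpM2r => //; lra.
  lra.
  apply: (@core R x (21/20) (20/21) (29/50) (3/5)); try lra.
Qed.

Local Open Scope classical_set_scope.
Local Open Scope ring_scope.

Lemma ereal_series_fin (R : realType) (u : nat -> R) (l : R) :
  (fun N : nat => (\sum_(0 <= k < N) u k)%R) @ \oo --> l ->
  (\sum_(0 <= k <oo) (u k)%:E = l%:E)%E.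
Proof.
move=> H.
have -> : (fun N => (\sum_(0 <= k < N) (u k)%:E)%E) = EFin \o (fun N => \sum_(0 <= k < N) u k).
  by apply/funext => N /=; rewrite sumEFin.
rewrite EFin_lim; last by apply/cvg_ex; exists l.
by rewrite (cvg_lim _ H).
Qed.

Lemma cvg_from_bound (R : realType) (S : nat -> R) (l C : R) :
  (forall K, (0 < K)%N -> `|l - S K.+1| <= C / K%:R) -> S @ \oo --> l.
Proof.
move=> HB; apply/cvgrPdist_le => eps eps0.
move: (nbhs_infty_gtr (`|C| / eps + 2)); apply: filterS => N HN.
have q0 : 0 <= `|C| / eps by apply: divr_ge0 => //; apply: ltW.
have qe : `|C| = (`|C| / eps) * eps by rewrite divfK // gt_eqF.
move: qe HN q0; set q := `|C| / eps => qe HN q0.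
case: N HN => [|K] HN; first by move: HN; rewrite /= ; lra.
have K0 : (0 < K)%N.
  case: K HN => // HN; move: HN; rewrite /=; lra.
apply: le_trans (HB K K0) _.
have K0R : (0 : R) < K%:R by rewrite ltr0n.
rewrite ler_pdivrMr //.
have : C <= `|C| := ler_norm C.
have : q + 1 < K%:R by move: HN; rewrite -natr1; lra.
nra.
Qed.

Section Fin.
Variables (R : realType) (n tau : nat).
Hypotheses (tau0 : (0 < tau)%N) (taun : (tau <= n)%N).

Definition gz (z : R) i := z * (n - i)%:R / (n%:R - i%:R * z).
Definition hz (z : R) d := \prod_(d <= i < tau) gz z i.

Section Z.
Variable z : R.
Hypotheses (z1 : 1 <= z) (zi : forall i, (i < tau)%N -> i%:R * z < n%:R).

Lemma gz_ge1 i : (i < tau)%N -> 1 <= gz z i.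
Proof.
move=> it; have := zi it => hi.
have din : (i <= n)%N := leq_trans (ltnW it) taun.
rewrite /gz ler_pdivlMr ?subr_gt0 // mul1r natrB //.
have nn : (0 : R) <= n%:R := ler0n _ _.
have : 0 <= (z - 1) * n%:R by apply: mulr_ge0 => //; rewrite subr_ge0.
lra.
Qed.

Lemma hz_ge1 d : 1 <= hz z d.
Proof.
rewrite /hz big_nat_cond.
apply: (big_ind (fun x => 1 <= x)) => //.
  by move=> x y hx hy; nra.
move=> i /andP [/andP [_ it] _]; exact: gz_ge1.
Qed.

Lemma tail_bound k : z ^+ k * \sum_(d < tau) p R n k d <= hz z 0.
Proof.
have z0 : 0 < z by apply: lt_le_trans z1.
apply: le_trans (tail tau0 taun (h := hz z) z0 _ _ k).
- apply: ler_wpM2l; first by apply: exprn_ge0; apply: ltW.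
  apply: ler_sum => d _; have := hz_ge1 d; have := p_ge0 R n k d; nra.
- by have := hz_ge1 tau; lra.
- move=> d dt; rewrite /hz big_ltn //.
  set X := \prod_(d.+1 <= i < tau) gz z i.
  have din : (d <= n)%N := leq_trans (ltnW dt) taun.
  have := zi dt => hi.
  have nz : (n%:R : R) != 0 by apply: (nR0 R tau0 taun).
  have dz : (n%:R - d%:R * z : R) != 0 by rewrite subr_eq0 gt_eqF.
  rewrite /gz natrB //; field; by rewrite nz dz.
Qed.
End Z.


Lemma e0_closed : e R n tau 0 = tau%:R + \sum_(1 <= i < tau) i%:R / (n - i)%:R.
Proof.
rewrite /e big_nat_cond.
rewrite (eq_bigr (fun i => 1 + i%:R / (n - i)%:R)); last first.
  move=> i /andP [/andP [_ it] _].
  have iin : (i <= n)%N := leq_trans (ltnW it) taun.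
  have ni : ((n - i)%:R : R) != 0 by rewrite pnatr_eq0 subn_eq0 -ltnNge (leq_trans it taun).
  by rewrite -{1}(subnK iin) natrD mulrDl divff.
rewrite -big_nat_cond big_split /= sumr_const_nat subn0.
by rewrite (big_ltn tau0) /= mul0r add0r.
Qed.

Lemma bern (d : R) K : 0 <= d -> 1 + K%:R * d <= (1 + d) ^+ K.
Proof.
move=> d0; elim: K => [|K IH]; first by rewrite expr0 mul0r addr0.
rewrite exprS -natr1.
have h1 : 0 <= 1 + d by lra.
have := ler_wpM2l h1 IH.
have : 0 <= K%:R * d * d by apply: mulr_ge0 => //; apply: mulr_ge0 => //; apply: ler0n.
nra.
Qed.

Lemma e_le_e0 d : (d <= tau)%N -> 0 <= e R n tau d <= e R n tau 0.
Proof.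
move=> dt; have ge0 : forall i, (0 : R) <= n%:R / (n - i)%:R by move=> i; apply: divr_ge0.
have sp : e R n tau 0 = \sum_(0 <= i < d) (n%:R / (n - i)%:R : R) + e R n tau d.
  by rewrite /e (big_cat_nat (n := d) (m := 0)).
have h1 : 0 <= \sum_(0 <= i < d) (n%:R / (n - i)%:R : R) by apply: sumr_ge0.
have h2 : 0 <= e R n tau d by apply: sumr_ge0.
by apply/andP; split => //; lra.
Qed.

Lemma expect_value : expect_T R n tau = (e R n tau 0)%:E.
Proof.
have nR : (1 : R) <= n%:R by rewrite ler1n (leq_trans tau0 taun).
set m := (n%:R : R) in nR.
set dl := (4 * m)^-1.
have dl0 : 0 < dl by rewrite invr_gt0; lra.
have m0 : m != 0 by rewrite gt_eqF //; lra.
have dlm : dl * m = 1/4 by rewrite /dl; field; rewrite m0.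
set z := (1 + dl) ^+ 2.
have z1 : 1 <= z by rewrite /z; nra.
have zi : forall i, (i < tau)%N -> i%:R * z < n%:R.
  move=> i it; have : (i.+1 <= n)%N := leq_trans it taun.
  rewrite -(ler_nat R) -natr1 -/m => hi.
  have i0 : (0 : R) <= i%:R := ler0n _ _.
  rewrite /z; nra.
set H := hz z 0.
set E := e R n tau 0.
have H1 : 1 <= H := hz_ge1 z1 zi 0.
have E0 : 0 <= E by have := e_le_e0 (leq0n tau) => /andP [].
rewrite /expect_T; apply: ereal_series_fin.
apply: (@cvg_from_bound R _ _ (H * (dl^-1 + E) / dl)) => K K0.
rewrite big_mkord.
have := expect_id R tau0 taun K; set S := \sum_(j < K.+1) _; set RK := \sum_(d < tau) _ => HS.
have -> : E - S = RK by rewrite /E -HS; ring.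
set P := \sum_(d < tau) p R n K d.
have P0 : 0 <= P by apply: sumr_ge0 => d _; exact: p_ge0.
have RK0 : 0 <= RK.
  apply: sumr_ge0 => d _; apply: mulr_ge0; first exact: p_ge0.
  have := e_le_e0 (ltnW (ltn_ord d)) => /andP [h _]; have := ler0n R K; lra.
have RKle : RK <= (K%:R + E) * P.
  rewrite /P mulr_sumr; apply: ler_sum => d _.
  have := e_le_e0 (ltnW (ltn_ord d)); rewrite -/E => /andP [_ h].
  have := p_ge0 R n K d; nra.
have TB : z ^+ K * P <= H := tail_bound z1 zi K.
have BB : (1 + K%:R * dl) ^+ 2 <= z ^+ K.
  rewrite /z -exprM mulnC exprM; apply: lerXn2r; rewrite ?nnegrE.
  - have := ler0n R K; nra.
  - by apply: exprn_ge0; lra.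
  exact: bern (ltW dl0).
have K0R : (0 : R) < K%:R by rewrite ltr0n.
rewrite ger0_norm //.
apply: le_trans RKle _.
rewrite ler_pdivlMr // ler_pdivlMr //.
have KP : (1 + K%:R * dl) ^+ 2 * P <= H.
  apply: le_trans TB; apply: ler_wpM2r => //.
have key : (K%:R + E) * K%:R * dl * dl <= (1 + E * dl) * (1 + K%:R * dl) ^+ 2.
  rewrite expr2.
  have : 0 <= E * dl by apply: mulr_ge0 => //; apply: ltW.
  have : 0 <= K%:R * dl by apply: mulr_ge0; apply: ltW.
  nra.
have eq1 : H * (dl^-1 + E) = H * (1 + E * dl) / dl.
  by field; rewrite gt_eqF.
rewrite eq1 ler_pdivlMr //.
have Ed : 0 <= E * dl by apply: mulr_ge0 => //; apply: ltW.
have Ed1 : 0 <= 1 + E * dl by lra.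
have s1 := ler_wpM2r P0 key.
have s2 := ler_wpM2l Ed1 KP.
have e1 : (K%:R + E) * P * K%:R * dl * dl = (K%:R + E) * K%:R * dl * dl * P by ring.
have e2 : (1 + E * dl) * (1 + K%:R * dl) ^+ 2 * P = (1 + E * dl) * ((1 + K%:R * dl) ^+ 2 * P) by ring.
rewrite e1; apply: le_trans s1 _; rewrite e2 [X in _ <= X]mulrC; exact: s2.
Qed.

End Fin.

Section PS.
Variable R : realType.

Lemma psum1 t : \sum_(i < t) (i%:R : R) <= t%:R^+2 / 2.
Proof.
elim: t => [|t IH]; first by rewrite big_ord0 expr0n /= mul0r.
rewrite big_ord_recr /= -natr1.
have := ler0n R t; rewrite !expr2 in IH *; nra.
Qed.

Lemma psum2 t : \sum_(i < t) (i%:R : R)^+2 <= t%:R^+3 / 3.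
Proof.
elim: t => [|t IH]; first by rewrite big_ord0 expr0n /= mul0r.
rewrite big_ord_recr /= -natr1.
have := ler0n R t; rewrite !exprS !expr0 in IH *; nra.
Qed.

Lemma psum3 t : \sum_(i < t) (i%:R : R)^+3 <= t%:R^+4 / 4.
Proof.
elim: t => [|t IH]; first by rewrite big_ord0 expr0n /= mul0r.
rewrite big_ord_recr /= -natr1.
have := ler0n R t; rewrite !exprS !expr0 in IH *; nra.
Qed.

Lemma term_bound (t z U : R) : 0 <= t -> 0 <= z -> t * z <= U -> U < 1 ->
  t / (1 - t * z) <= t + z * t^+2 + z^+2 * t^+3 / (1 - U).
Proof.
move=> t0 z0 tU U1.
have D0 : 0 < 1 - t * z by lra.
rewrite ler_pdivrMr //.
set c := z^+2 * t^+3 / (1 - U).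
have ce : c * (1 - U) = z^+2 * t^+3 by rewrite /c divfK // gt_eqF // subr_gt0.
have c0 : 0 <= c by apply: divr_ge0; [apply: mulr_ge0; apply: exprn_ge0 | lra].

have : 0 <= c * ((1 - t * z) - (1 - U)) by apply: mulr_ge0 => //; lra.
rewrite !exprS !expr0 in ce *.
nra.
Qed.
Lemma eqle (a b : R) : a = b -> a <= b. Proof. by move=> ->. Qed.
End PS.

Section Part2.
Variables (R : realType) (n tau : nat).
Hypotheses (tau0 : (0 < tau)%N) (taun : (tau <= n)%N).

Lemma part2 : (2 / 100 : R) * n%:R < tau%:R -> (tau%:R : R) < (6 / 10) * n%:R ->
  1 - expR (- ((n%:R : R) / 60)) <= prob_T_le R n tau (2 * tau).
Proof.
move=> h1 h2.
have m0 : (0 : R) < n%:R by rewrite ltr0n (leq_trans tau0 taun).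
have mn0 : (n%:R : R) != 0 by rewrite gt_eqF.
set x := tau%:R / (n%:R : R).
have tx : tau%:R = x * n%:R by rewrite /x divfK.
have hx1 : 1/50 < x by rewrite /x ltr_pdivlMr //; lra.
have hx2 : x < 3/5 by rewrite /x ltr_pdivrMr //; lra.
have [w [v [w1 wv xw Fneg]]] := cases hx1 hx2.
have x0 : 0 <= x by lra.
rewrite /Fx in Fneg.
have w4 : w^+4 = (w^+2)^+2 by rewrite -exprM.
rewrite w4 in Fneg.
set z := w^+2 in xw Fneg.
have z1 : 1 <= z by rewrite /z expr2; nra.
have zi : forall i, (i < tau)%N -> i%:R * z < n%:R.
  move=> i it; have : (i%:R : R) <= tau%:R by rewrite ler_nat ltnW.
  rewrite tx => hi.
  have : x * z * n%:R < n%:R by rewrite -[X in _ < X]mul1r ltr_pM2r.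
  have : 0 <= z by lra.
  nra.
have z0 : 0 < z by lra.
rewrite /prob_T_le.
have := total_prob R tau0 taun (2 * tau).
set Pp := \sum_(d < tau) p R n (2 * tau) d => Htot.
suff : Pp <= expR (- ((n%:R : R) / 60)) by lra.
have TB := tail_bound tau0 taun z1 zi (2 * tau).
rewrite -/Pp in TB.
pose t (i : nat) : R := i%:R / n%:R.
pose Y := \sum_(0 <= i < tau) (z - 1) * (t i / (1 - t i * z)).
have tle : forall i, (i <= tau)%N -> 0 <= t i <= x.
  move=> i it; apply/andP; split; first by rewrite /t divr_ge0.
  by rewrite /t /x ler_pM2r ?invr_gt0 // ler_nat.
have HB : hz n tau z 0 <= z^+tau * expR Y.
  have -> : z^+tau * expR Y =
     \prod_(0 <= i < tau) (z * expR ((z - 1) * (t i / (1 - t i * z)))).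
    by rewrite big_split /= prodr_const_nat subn0 expR_sum.
  rewrite /hz big_nat_cond [X in _ <= X]big_nat_cond.
  apply: ler_prod => i /andP [/andP [_ it] _].
  have hi := zi i it.
  have iin : (i <= n)%N := leq_trans (ltnW it) taun.
  have den : 0 < n%:R - i%:R * z by lra.
  have tzp : 0 < 1 - t i * z.
    by rewrite /t subr_gt0 mulrAC ltr_pdivrMr // mul1r.
  have tz : 1 - t i * z != 0 by rewrite gt_eqF.
  have q : gz n z i = z * (1 + (z - 1) * (t i / (1 - t i * z))).
    rewrite /gz /t natrB //; field.
    by rewrite mn0 gt_eqF.
  rewrite q; apply/andP; split.
    apply: mulr_ge0; first lra.
    apply: addr_ge0 => //; apply: mulr_ge0; first lra.
    apply: divr_ge0; last lra.
    by have := tle i (ltnW it) => /andP [].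
  apply: ler_wpM2l; first lra.
  exact: expR_ge1Dx.
set U := x * z.
have U1 : U < 1 by [].
have tU : forall i : 'I_tau, t i * z <= U.
  move=> i; have := tle i (ltnW (ltn_ord i)) => /andP [_ h].
  by rewrite /U ler_wpM2r //; lra.
have t0 : forall i : 'I_tau, 0 <= t i by move=> i; have := tle i (ltnW (ltn_ord i)) => /andP [].
set K3 := z^+2 / (1 - U).
have K30 : 0 <= K3 by apply: divr_ge0; [apply: exprn_ge0; lra | lra].
have Yb : Y <= (z - 1) * (\sum_(i < tau) t i + z * \sum_(i < tau) (t i)^+2 + K3 * \sum_(i < tau) (t i)^+3).
  apply: (@le_trans _ _ (\sum_(i < tau) (z - 1) * (t i + z * (t i)^+2 + K3 * (t i)^+3))).
    rewrite /Y big_mkord; apply: ler_sum => i _; apply: ler_wpM2l; first lra.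
    rewrite /K3 [z^+2 / _ * _]mulrAC; exact: term_bound (t0 i) (ltW z0) (tU i) U1.
  rewrite -mulr_sumr !big_split /= -!mulr_sumr; exact: lexx.
have S1 : \sum_(i < tau) t i <= n%:R * x^+2 / 2.
  have -> : \sum_(i < tau) t i = (\sum_(i < tau) (i%:R : R)) / n%:R by rewrite mulr_suml.
  apply: le_trans (ler_wpM2r _ (psum1 R tau)) _; first by rewrite invr_ge0 ltW.
  by rewrite tx; apply: eqle; field.
have S2 : \sum_(i < tau) (t i)^+2 <= n%:R * x^+3 / 3.
  have -> : \sum_(i < tau) (t i)^+2 = (\sum_(i < tau) (i%:R : R)^+2) / n%:R^+2.
    by rewrite mulr_suml; apply: eq_bigr => i _; rewrite /t expr_div_n.
  apply: le_trans (ler_wpM2r _ (psum2 R tau)) _; first by rewrite invr_ge0 exprn_ge0 // ltW.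
  by rewrite tx; apply: eqle; field.
have S3 : \sum_(i < tau) (t i)^+3 <= n%:R * x^+4 / 4.
  have -> : \sum_(i < tau) (t i)^+3 = (\sum_(i < tau) (i%:R : R)^+3) / n%:R^+3.
    by rewrite mulr_suml; apply: eq_bigr => i _; rewrite /t expr_div_n.
  apply: le_trans (ler_wpM2r _ (psum3 R tau)) _; first by rewrite invr_ge0 exprn_ge0 // ltW.
  by rewrite tx; apply: eqle; field.
have Yb2 : Y <= (z - 1) * (n%:R * x^+2 / 2 + z * (n%:R * x^+3 / 3) + K3 * (n%:R * x^+4 / 4)).
  apply: le_trans Yb _; apply: ler_wpM2l; first lra.
  have := ler_wpM2l (ltW z0) S2; have := ler_wpM2l K30 S3; lra.
have U1' : 1 - U != 0 by rewrite gt_eqF // subr_gt0.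
have eqY : (z - 1) * (n%:R * x^+2 / 2 + z * (n%:R * x^+3 / 3) + K3 * (n%:R * x^+4 / 4)) =
   n%:R * ((z - 1) * (x ^+ 2 / 2 + z * x ^+ 3 / 3 + z ^+ 2 * x ^+ 4 / (4 * (1 - x * z)))).
  by rewrite /K3 /U; field; rewrite -/U U1'.
have eqT : (2 * tau)%:R * (v - 1) = n%:R * (2 * x * (v - 1)) :> R by rewrite natrM tx; ring.
have expo : Y + (2 * tau)%:R * (v - 1) <= - ((n%:R : R) / 60).
  rewrite eqT; move: Yb2; rewrite eqY => Yb2.
  set F0 := (z - 1) * _ in Yb2 Fneg.
  have : n%:R * (F0 + 2 * x * (v - 1) + 1 / 60) <= 0.
    by rewrite pmulr_rle0.
  lra.
have zt0 : 0 < z ^+ tau by apply: exprn_gt0.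
have TB2 : z ^+ tau * Pp <= expR Y.
  rewrite -(ler_pM2l zt0) mulrA -exprD addnn -mul2n.
  exact: le_trans TB HB.
have v0 : 0 < v by nra.
have zv : z * v^+2 = 1 by rewrite /z -exprMn wv expr1n.
have Pp_eq : Pp = v ^+ (2 * tau) * (z ^+ tau * Pp).
  by rewrite mulrA exprM -exprMn [v^+2 * z]mulrC zv expr1n mul1r.
have vle : v ^+ (2 * tau) <= expR ((2 * tau)%:R * (v - 1)).
  rewrite expRM_natl; apply: lerXn2r.
  - by rewrite nnegrE; apply: ltW.
  - by rewrite nnegrE expR_ge0.
  - by have := expR_ge1Dx (v - 1); lra.
rewrite Pp_eq.
apply: le_trans (ler_pM (exprn_ge0 _ (ltW v0)) _ vle TB2) _.
  by apply: mulr_ge0; [apply: ltW | apply: sumr_ge0 => d _; exact: p_ge0].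
by rewrite -expRD ler_expR addrC.
Qed.
End Part2.
Local Close Scope classical_set_scope.
Unset Implicit Arguments.

Theorem proposition1 (R : realType) (n tau : nat) :
  (0 < tau)%N -> (tau <= n)%N ->
  expect_T R n tau =
    ((tau%:R : R) + \sum_(1 <= i < tau) ((i%:R : R) / (n - i)%:R))%:E
  /\
  ((2 / 100 : R) * n%:R < tau%:R -> (tau%:R : R) < (6 / 10) * n%:R ->
   1 - expR (- ((n%:R : R) / 60)) <= prob_T_le R n tau (2 * tau)).
Proof.
move=> tau0 taun; split.
  by rewrite (expect_value R tau0 taun) (e0_closed R tau0 taun).
exact: part2 tau0 taun.
Qed.
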